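(* Let $V\subset\mathbb N$ be finite, $l\in\mathbb N$, and let $G_{\mathbf i}\in\mathcal C_{V,2l}$ have a balanced leaf $v_j$. Let $\widetilde G$ be the version of $G_{\mathbf i}$ with $v_j$ removed. Then $B(G_{\mathbf i})\setminus\{v_j\}=B(\widetilde G)$.
   Context: For a finite $V\subset\mathbb N$ and $N\ge1$, a route through $V$ of length $N$ is a sequence $\mathbf i=(i_1,\dots,i_N)\in V^N$ whose set of entries equals $V$; its circuit multigraph $G_{\mathbf i}$ has vertex set $V$ and edges $1,\dots,N$, edge $k<N$ from $i_k$ to $i_{k+1}$, edge $N$ from $i_N$ to $i_1$; $\mathcal C_{V,N}$ is the set of these. The black vertices are $B(G_{\mathbf i})=\{i_t:t\text{ odd}\}$. Balanced leaf (only when $N>2$): a vertex $v$ occurring exactly once in $\mathbf i$, say $i_t=v$, whose cyclic neighbours $i_{t-1},i_{t+1}$ (indices mod $N$) are equal. The version with $v=i_t$ removed is $G_{\mathbf i'}$, where $\mathbf i'$ is obtained from $\mathbf i$ by deleting the entries at positions $t,t+1$ if $t<N$, and at positions $N-1,N$ if $t=N$; it is a route through $V\setminus\{v\}$ of length $N-2$. *)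

(* Defs.v *)
From mathcomp Require Import all_boot.
From mathcomp Require Import finmap.
Set Implicit Arguments. Unset Strict Implicit. Unset Printing Implicit Defensive.
Local Open Scope fset_scope.

(* A route is a sequence i = (i_1,...,i_N) of naturals; positions are 1-based. *)
Definition ent (i : seq nat) (t : nat) : nat := nth 0 i t.-1.

Definition is_route (V : {fset nat}) (N : nat) (i : seq nat) : Prop :=
  size i = N /\ (forall x : nat, (x \in i) = (x \in V)).

Definition cprev (N t : nat) : nat := if t == 1 then N else t.-1.
Definition cnext (N t : nat) : nat := if t == N then 1 else t.+1.

Definition balanced_leaf (i : seq nat) (t : nat) : Prop :=
  let N := size i in
  [/\ 2 < N, 1 <= t <= N, count_mem (ent i t) i = 1
    & ent i (cprev N t) = ent i (cnext N t)].

(* The route i' of the version with v = i_t removed: delete positions t, t+1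
   if t < N, and positions N-1, N if t = N. *)
Definition remove_leaf (i : seq nat) (t : nat) : seq nat :=
  let N := size i in
  if t < N then take t.-1 i ++ drop t.+1 i else take (N - 2) i.

Definition black (i : seq nat) : seq nat :=
  [seq ent i t | t <- iota 1 (size i) & odd t].

(* Main.v *)
Require Import Defs.
From mathcomp Require Import all_boot.
From mathcomp Require Import finmap.
From mathcomp Require Import zify.

Lemma blackP (i : seq nat) x :
  reflect (exists k, [/\ k < size i, ~~ odd k & nth 0 i k = x]) (x \in black i).
Proof.
apply: (iffP mapP) => [[s]|[k [hk ho hx]]].
  rewrite mem_filter mem_iota => /andP[hs /andP[h1 h2]] ->.
  exists s.-1; split.
  - lia.
  - by case: s hs h1 {h2}.
  - by [].
exists k.+1; last by [].
rewrite mem_filter mem_iota /= ho /=; lia.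
Qed.

Lemma two_occ (i : seq nat) a b :
  a < b -> b < size i -> nth 0 i a = nth 0 i b -> 1 < count_mem (nth 0 i b) i.
Proof.
move=> hab hb he.
have hm : nth 0 i b \in take b i.
  by rewrite -he -(nth_take 0 hab); apply: mem_nth; rewrite size_take hb.
move: hm; set y := nth 0 i b => hm.
have hd : drop b i = y :: drop b.+1 i by rewrite (drop_nth 0 hb).
rewrite -(cat_take_drop b i) count_cat hd /= eqxx.
move: hm; rewrite -has_pred1 has_count => H.
by rewrite add1n addnS ltnS (leq_trans H) // leq_addr.
Qed.

Lemma uniq_pos (i : seq nat) p k :
  count_mem (nth 0 i p) i = 1 -> p < size i -> k < size i ->
  nth 0 i k = nth 0 i p -> k = p.
Proof.
move=> hc hp hk he.
case: (ltngtP k p) => // h.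
- have := @two_occ i k p h hp he; lia.
- have := @two_occ i p k h hk (esym he); rewrite he; lia.
Qed.

Theorem lemma4p3 (V : {fset nat}) (l : nat) (i : seq nat) (t : nat) :
  is_route V (2 * l) i -> balanced_leaf i t ->
  black (remove_leaf i t) =i [predD1 black i & ent i t].
Proof.
move=> _ [hN /andP[ht1 htN] hc hbal] x.
rewrite /ent in hc hbal *.
set N := size i in hN htN hbal *.
set p := t.-1 in hc hbal *.
have hp : p < N by rewrite /p; lia.
have hu k := @uniq_pos i p k hc hp.
rewrite /remove_leaf -/N inE.
case: ltnP => htN'.
-
  have -> : t.+1 = p.+2 by rewrite /p; lia.
  have hsz : size (take p i ++ drop p.+2 i) = N - 2.
    rewrite size_cat size_take size_drop -/N hp; lia.
  have hnth k : nth 0 (take p i ++ drop p.+2 i) k =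
                if k < p then nth 0 i k else nth 0 i (k + 2).
    rewrite nth_cat size_take -/N hp nth_drop.
    case: ifP => hk; first by rewrite nth_take.
    congr nth; lia.
  apply/blackP/andP => [[k [hk ho hx]]|[hxv /blackP [k [hk ho hx]]]].
  + rewrite hsz in hk; rewrite hnth in hx.
    move: hx; case: ifP => hkp hx.
    * split; last by apply/blackP; exists k; split => //; lia.
      apply/negP => /eqP hxe; subst x; have := hu k ltac:(lia) hxe; lia.
    * split; last by apply/blackP; exists (k + 2); split => //; [lia | rewrite oddD /= addbF].
      apply/negP => /eqP hxe; subst x; have := hu (k+2) ltac:(lia) hxe; lia.
  + have hkp : k != p by apply: contra hxv => /eqP hkp; rewrite -hx hkp.
    case: (ltngtP k p) => hkp'.
    * exists k; split; [rewrite hsz; lia | by [] | by rewrite hnth hkp'].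
    * case: (ltngtP k p.+1) => hk1.
      -- lia.
      -- exists (k - 2); split; [rewrite hsz; lia | | ].
         ++ move: ho; have -> : k = (k - 2) + 2 by lia.
            by rewrite oddD /= addbF addnK.
         ++ rewrite hnth ifF; last lia.
            by rewrite -hx; congr nth; lia.
      -- subst k.
         have hpt : p = t.-1 by [].
         have hp1 : 0 < p by move: ho; case: (p).
         have e1 : (t == 1) = false by apply/negbTE; lia.
         have e2 : (t == N) = false by apply/negbTE; lia.
         have hbal' : nth 0 i p.-1 = nth 0 i p.+1.
           move: hbal; rewrite /cprev /cnext e1 e2.
           have -> : t.+1.-1 = p.+1 by lia.
           by [].
         exists (p.-1); split.
         ++ rewrite hsz; lia.
         ++ by move: ho hp1; case: (p) => [|q] //= ; rewrite negbK.
         ++ by rewrite hnth ifT ?hbal' //; lia.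
    * by move: hkp; rewrite hkp' eqxx.
-
  have htE : t = N by lia.
  have hsz : size (take (N - 2) i) = N - 2 by rewrite size_take -/N; case: ifP; lia.
  have hnth k : k < N - 2 -> nth 0 (take (N - 2) i) k = nth 0 i k.
    by move=> hk; rewrite nth_take.
  apply/blackP/andP => [[k [hk ho hx]]|[hxv /blackP [k [hk ho hx]]]].
  + rewrite hsz in hk; rewrite hnth // in hx.
    split; last by apply/blackP; exists k; split => //; lia.
    apply/negP => /eqP hxe; subst x; have := hu k ltac:(lia) hxe; rewrite /p; lia.
  + have hkp : k != p by apply: contra hxv => /eqP hkp; rewrite -hx hkp.
    case: (ltnP k (N - 2)) => hk2.
    * by exists k; split => //; [rewrite hsz | rewrite hnth].
    * have hkE : k = N - 2 by rewrite /p in hkp; lia.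
      move: hbal; rewrite /cprev /cnext htE eqxx ifF; last by apply/negbTE; lia.
      move=> hbal.
      exists 0; split; [rewrite hsz; lia | by [] | ].
      rewrite hnth; last lia.
      rewrite -hx hkE -hbal /=; congr nth; lia.
Qed.
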